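(* Every stratum of $G_{4,2}$ whose polytope $\mu(\overline{\mathcal{O}(X)})$ is different from $\Delta_{4,2}$ consists of exactly one $(\mathbb{C}^* )^4$-orbit.
   Context: $G_{4,2}$ is the complex Grassmann manifold of $2$-planes in $\mathbb{C}^4$, with the action of $(\mathbb{C}^* )^4$ induced from the coordinatewise action on $\mathbb{C}^4$; $\overline{\mathcal{O}(X)}$ is the closure of the $(\mathbb{C}^* )^4$-orbit of $X$. Plücker coordinates $P^{ij}(X)$ ($1\le i<j\le4$) are the $2\times 2$ minors on rows $i,j$ of a $4\times2$ matrix whose columns span $X$; $\delta_{ij}\in\mathbb{R}^4$ has $1$ in positions $i,j$ and $0$ elsewhere; $\Delta_{4,2}$ is the convex hull of the $\delta_{ij}$; $\mu(X)=\sum|P^{ij}(X)|^2\delta_{ij}/\sum|P^{ij}(X)|^2$. Two points $X_1,X_2$ lie in the same stratum iff $\mu(\overline{\mathcal{O}(X_1)})=\mu(\overline{\mathcal{O}(X_2)})$, and this common polytope is called the polytope of the stratum. *)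

(* Defs.v *)
From HB Require Import structures.
From mathcomp Require Import all_boot all_order all_algebra.
From mathcomp Require Import reals.
From mathcomp Require Import complex.
Set Implicit Arguments.
Unset Strict Implicit.
Unset Printing Implicit Defensive.
Import Order.TTheory GRing.Theory Num.Theory.
Local Open Scope ring_scope.

Section G42.
Variable R : realType.
Local Notation C := (R[i]).

Definition sqmod (z : C) : R := let: Complex a b := z in a ^+ 2 + b ^+ 2.

(* A point X of G_{4,2} is represented by a 4x2 complex matrix of rank 2 whose
   columns span X.  Two such matrices represent the same plane iff A' = A *m g
   with g in GL_2(C). *)
Definition is_frame (A : 'M[C]_(4,2)) : Prop := \rank A = 2%N.

Definition pluecker (A : 'M[C]_(4,2)) (i j : 'I_4) : C :=
  A i 0 * A j 1 - A j 0 * A i 1.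

Definition delta (i j : 'I_4) : 'rV[R]_4 :=
  \row_k ((k == i) || (k == j))%:R.

Definition mu (A : 'M[C]_(4,2)) : 'rV[R]_4 :=
  (\sum_(i < 4) \sum_(j < 4 | (i < j)%N) sqmod (pluecker A i j))^-1 *:
  \sum_(i < 4) \sum_(j < 4 | (i < j)%N) sqmod (pluecker A i j) *: delta i j.

Definition Delta42 : 'rV[R]_4 -> Prop := fun v =>
  exists lam : 'I_4 -> 'I_4 -> R,
    (forall i j, 0 <= lam i j) /\
    \sum_(i < 4) \sum_(j < 4 | (i < j)%N) lam i j = 1 /\
    v = \sum_(i < 4) \sum_(j < 4 | (i < j)%N) lam i j *: delta i j.

(* action of t in (C^* )^4 (coordinatewise) followed by a change of basis g in GL_2:
   a frame of the plane t.X when A is a frame of X *)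
Definition torus_frame (t : 'I_4 -> C) (A : 'M[C]_(4,2)) (g : 'M[C]_2) : 'M[C]_(4,2) :=
  diag_mx (\row_k t k) *m A *m g.

Definition torus_elt (t : 'I_4 -> C) : Prop := forall k, t k != 0.

Definition in_torus_orbit (A B : 'M[C]_(4,2)) : Prop :=
  exists (t : 'I_4 -> C) (g : 'M[C]_2),
    torus_elt t /\ g \in unitmx /\ B = torus_frame t A g.

Definition mx_cvg (M : nat -> 'M[C]_(4,2)) (B : 'M[C]_(4,2)) : Prop :=
  forall i j (e : R), 0 < e ->
    exists N : nat, forall n : nat, (N <= n)%N -> sqmod (M n i j - B i j) < e.

(* Y (is_frame B) lies in the closure of the orbit of X (is_frame A), for the usual
   (quotient, metrizable) topology of G_{4,2} = {rank-2 frames}/GL_2 : some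
   sequence of frames of points of the orbit converges to a frame of Y. *)
Definition in_torus_orbit_closure (A B : 'M[C]_(4,2)) : Prop :=
  is_frame B /\
  exists (t : nat -> 'I_4 -> C) (g : nat -> 'M[C]_2),
    (forall n, torus_elt (t n) /\ g n \in unitmx) /\
    mx_cvg (fun n => torus_frame (t n) A (g n)) B.

Definition orbit_polytope (A : 'M[C]_(4,2)) : 'rV[R]_4 -> Prop := fun v =>
  exists B, in_torus_orbit_closure A B /\ mu B = v.

End G42.

(* Main.v *)
Require Import Defs.
From HB Require Import structures.
From mathcomp Require Import all_boot all_order all_algebra.
From mathcomp Require Import reals.
From mathcomp Require Import complex.
From mathcomp Require Import all_classical topology normedtype realfun.
From mathcomp Require Import lra ring.
Set Implicit Arguments. Unset Strict Implicit. Unset Printing Implicit Defensive.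
Import Order.TTheory GRing.Theory Num.Theory.
Import numFieldTopology.Exports numFieldNormedType.Exports.
Local Open Scope ring_scope.
From Stdlib Require Import FunctionalExtensionality PropExtensionality.

Lemma sqrt_aff_cont (R : realType) (a b : R) :
  continuous (fun u : R => Num.sqrt (a + b * u)).
Proof.
move=> x.
have h1 : {for x, continuous (fun u : R => a + b * u)}.
  apply: continuousD; first exact: cst_continuous.
  apply: continuousM; [exact: cst_continuous| exact: (fun t => t)].
exact: (continuous_comp h1 (@sqrt_continuous R _)).
Qed.

Lemma hterm_cont (R : realType) (a m : R) :
  continuous (fun u : R => (- a + Num.sqrt (a ^+ 2 + (4 * m) * u)) / 2).
Proof.
move=> x.
apply: (@continuousM _ _ (fun u : R => - a + Num.sqrt (a ^+ 2 + (4 * m) * u)) (fun _ => 2^-1)); last exact: cst_continuous.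
apply: (@continuousD _ _ _ (fun _ => - a) (fun u : R => Num.sqrt (a ^+ 2 + (4 * m) * u))); first exact: cst_continuous.
exact: sqrt_aff_cont.
Qed.

Lemma core (R : realType) (L K vi vj vk vl : R) :
  0 < L -> 0 < K -> 0 <= vk -> 0 <= vl -> vi <= 1 -> vi + vj + vk + vl = 2 ->
  vj <= vi -> vk <= vj -> vl <= vj ->
  exists cij cik cil cjk cjl ckl : R,
   (0 < cij /\ [/\ 0 <= cik, 0 <= cil, 0 <= cjk, 0 <= cjl & 0 <= ckl]) /\
   [/\ cij + cik + cil = vi, cij + cjk + cjl = vj, cik + cjk + ckl = vk
     & cil + cjl + ckl = vl] /\
   cij * ckl = L * (cik * cjl) /\ cil * cjk = K * (cik * cjl).
Proof.
move=> L0 K0 vk0 vl0 vi1 vs vji vkj vlj.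
pose A0 := (vi + vj - vk - vl) / 2; pose B0 := (vi + vk - vj - vl) / 2.
pose C0 := (vi + vl - vj - vk) / 2; pose E0 := 1 - vi.
pose sq (a m u : R) := Num.sqrt (a ^+ 2 + (4 * m) * u).
have sqge : forall a m u, 0 <= m -> 0 <= u -> `|a| <= sq a m u.
  move=> a m u m0 u0; rewrite -sqrtr_sqr /sq; apply: ler_wsqrtr.
  by rewrite lerDl; apply: mulr_ge0 => //; apply: mulr_ge0.
have sqsq : forall a m u, 0 <= m -> 0 <= u -> sq a m u ^+ 2 = a ^+ 2 + 4 * m * u.
  move=> a m u m0 u0; rewrite sqr_sqrtr //.
  by apply: addr_ge0; [exact: sqr_ge0| apply: mulr_ge0 => //; apply: mulr_ge0].
have sq0 : forall a m, sq a m 0 = `|a|.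
  by move=> a m; rewrite /sq mulr0 addr0 sqrtr_sqr.
pose f u := (- A0 + sq A0 L u) / 2 + (- B0 + sq B0 1 u) / 2 + (- C0 + sq C0 K u) / 2.
have fc : continuous f.
  move=> x; rewrite /f /sq.
  apply: (@continuousD _ _ _ (fun u => (- A0 + Num.sqrt (A0 ^+ 2 + (4 * L) * u)) / 2 + (- B0 + Num.sqrt (B0 ^+ 2 + (4 * 1) * u)) / 2)); last exact: hterm_cont.
  apply: (@continuousD _ _ _ (fun u => (- A0 + Num.sqrt (A0 ^+ 2 + (4 * L) * u)) / 2)); exact: hterm_cont.
have nN : forall x : R, - x <= `|x| by move=> x; rewrite -normrN ler_norm.
have A00 : 0 <= A0 by rewrite /A0; lra.
have E00 : 0 <= E0 by rewrite /E0; lra.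
pose U := (E0 + `|B0|) ^+ 2.
have U0 : 0 <= U by exact: sqr_ge0.
have f0 : f 0 <= E0.
  rewrite /f !sq0 (ger0_norm A00).
  have [hb|hb] := lerP 0 B0; [rewrite (ger0_norm hb)|rewrite (ltr0_norm hb)];
  (have [hc|hc] := lerP 0 C0; [rewrite (ger0_norm hc)|rewrite (ltr0_norm hc)]);
  rewrite /B0 /C0 /E0 in hb hc *; lra.
have fU : E0 <= f U.
  have h1 := sqge A0 L U (ltW L0) U0.
  have h2 := sqge C0 K U (ltW K0) U0.
  have h3 : 2 * (E0 + `|B0|) <= sq B0 1 U.
    rewrite /sq -[X in X <= _]ger0_norm; last by apply: mulr_ge0 => //; apply: addr_ge0.
    rewrite -sqrtr_sqr; apply: ler_wsqrtr; rewrite /U; nra.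
  have hA := ler_norm A0. have hC := ler_norm C0. have hB := ler_norm B0.
  have := normr_ge0 B0; rewrite /f /=; lra.
have [u uI fu] : exists2 u, u \in `[0, U] & f u = E0.
  apply: IVT => //; first by apply: continuous_subspaceT.
  by rewrite ge_min f0 le_max fU orbT.
have u0 : 0 <= u by move: uI; rewrite in_itv /= => /andP[].
pose sx := sq A0 L u; pose sy := sq B0 1 u; pose sz := sq C0 K u.
have hx := sqge A0 L u (ltW L0) u0; have hy := sqge B0 1 u ler01 u0.
have hz := sqge C0 K u (ltW K0) u0.
have ex := sqsq A0 L u (ltW L0) u0; have ey := sqsq B0 1 u ler01 u0.
have ez := sqsq C0 K u (ltW K0) u0.
rewrite -/sx -/sy -/sz in hx hy hz ex ey ez.
have hA := nN A0. have hB := nN B0. have hC := nN C0.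
have := ler_norm A0; have := ler_norm B0; have := ler_norm C0 => hC' hB' hA'.
have sxy : (- A0 + sx) / 2 + (- B0 + sy) / 2 + (- C0 + sz) / 2 = E0 by [].
exists (A0 + (- A0 + sx) / 2), (B0 + (- B0 + sy) / 2), (C0 + (- C0 + sz) / 2),
  ((- C0 + sz) / 2), ((- B0 + sy) / 2), ((- A0 + sx) / 2).
split; [split; [|split]|split; [split|split]].
- rewrite ltNge; apply/negP => hle.
  have sx0 : sx = 0 by lra.
  have A0z : A0 = 0 by lra.
  have uz : u = 0.
    have : 4 * L * u = 0 by move: ex; rewrite sx0 A0z; lra.
    by move/eqP; rewrite !mulf_eq0 (gt_eqF L0) /= => /orP[|/eqP //]; lra.
  have B0z : B0 = 0 by rewrite /B0; rewrite /A0 in A0z; lra.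
  have C0z : C0 = 0 by rewrite /C0; rewrite /A0 in A0z; lra.
  have sy0 : sy = 0.
    have : sy ^+ 2 == 0 by rewrite ey B0z uz expr0n mulr0 addr0.
    by rewrite expf_eq0 /= => /eqP.
  have sz0 : sz = 0.
    have : sz ^+ 2 == 0 by rewrite ez C0z uz expr0n mulr0 addr0.
    by rewrite expf_eq0 /= => /eqP.
  move: sxy; rewrite sx0 sy0 sz0 A0z B0z C0z /E0; rewrite /A0 in A0z; lra.
- lra.
- lra.
- lra.
- lra.
- lra.
- rewrite /A0 /B0 /C0 /E0 in sxy *; lra.
- rewrite /A0 /B0 /C0 /E0 in sxy *; lra.
- rewrite /A0 /B0 /C0 /E0 in sxy *; lra.
- rewrite /A0 /B0 /C0 /E0 in sxy *; lra.
- nra.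
- nra.
Qed.

Section Main.
Variable R : realType.
Local Notation C := R[i].
Implicit Types A B : 'M[C]_(4,2).

Lemma sqmod_ge0 (z : C) : 0 <= sqmod z.
Proof. by case: z => a b; rewrite /sqmod addr_ge0 ?sqr_ge0. Qed.

Lemma sqmod_eq0 (z : C) : (sqmod z == 0) = (z == 0).
Proof.
case: z => a b; rewrite /sqmod paddr_eq0 ?sqr_ge0 // !expf_eq0 /=.
by rewrite eq_complex.
Qed.

Lemma sqmodM (x y : C) : sqmod (x * y) = sqmod x * sqmod y.
Proof. by case: x => a b; case: y => c d; rewrite /sqmod /=; ring. Qed.

Lemma sqmodN (x : C) : sqmod (- x) = sqmod x.
Proof. by case: x => a b; rewrite /sqmod /= !sqrrN. Qed.

Lemma sqmodR (r : R) : sqmod (r%:C)%C = r ^+ 2.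
Proof. by rewrite /sqmod /= expr0n addr0. Qed.

Lemma sqmodV (x : C) : sqmod (x^-1) = (sqmod x)^-1.
Proof.
case: x => a b; rewrite /sqmod /=.
have [n0|n0] := eqVneq (a ^+ 2 + b ^+ 2) 0.
  by rewrite n0 invr0 !mulr0 oppr0 expr0n addr0.
by field.
Qed.

Lemma pl_sym (A : 'M[C]_(4,2)) i j : pluecker A j i = - pluecker A i j.
Proof. rewrite /pluecker; ring. Qed.

Lemma pl_diag (A : 'M[C]_(4,2)) i : pluecker A i i = 0.
Proof. by rewrite /pluecker mulrC subrr. Qed.

Lemma mulmx42 m n (A : 'M[C]_(m,2)) (N : 'M[C]_(2,n)) i c :
  (A *m N) i c = A i 0 * N 0 c + A i 1 * N 1 c.
Proof.
rewrite mxE !big_ord_recr big_ord0 /= add0r.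
by congr (A i _ * N _ c + A i _ * N _ c); apply: val_inj.
Qed.

Lemma pl_mulr (A : 'M[C]_(4,2)) (N : 'M[C]_2) i j :
  pluecker (A *m N) i j = pluecker A i j * (N 0 0 * N 1 1 - N 0 1 * N 1 0).
Proof. rewrite /pluecker !mulmx42; ring. Qed.

Lemma pl_diagl (A : 'M[C]_(4,2)) (t : 'I_4 -> C) i j :
  pluecker (diag_mx (\row_k t k) *m A) i j = t i * t j * pluecker A i j.
Proof. rewrite /pluecker mul_diag_mx !mxE; ring. Qed.

Lemma ord2P (c : 'I_2) : c = 0 \/ c = 1.
Proof. by case: c => [[|[|n]] Hc] //; [left|right]; apply: val_inj. Qed.

Definition rows2 (A : 'M[C]_(4,2)) (i j : 'I_4) : 'M[C]_2 :=
  \matrix_(r < 2, c < 2) A (if r == 0 then i else j) c.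

Definition chart (A : 'M[C]_(4,2)) (i j : 'I_4) : 'M[C]_(4,2) :=
  \matrix_(m < 4, c < 2)
    ((if c == 0 then pluecker A m j else pluecker A i m) / pluecker A i j).

Lemma chartK A i j : pluecker A i j != 0 -> chart A i j *m rows2 A i j = A.
Proof.
move=> nz; apply/matrixP => m c; rewrite mulmx42 !mxE /=.
by case: (ord2P c) => ->; rewrite /pluecker /= in nz *; field.
Qed.

Lemma rows2_unit A i j : pluecker A i j != 0 -> rows2 A i j \in unitmx.
Proof.
move=> nz.
pose N : 'M[C]_2 := \matrix_(r < 2, c < 2)
  ((if r == 0 then (if c == 0 then A j 1 else - A i 1)
    else (if c == 0 then - A j 0 else A i 0)) / pluecker A i j).
suff h : rows2 A i j *m N = 1%:M by case: (mulmx1_unit h).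
apply/matrixP => r c; rewrite mulmx42 !mxE.
by case: (ord2P r) => ->; case: (ord2P c) => -> /=; rewrite /pluecker in nz *; field.
Qed.

Lemma pl_chart A i j x y : pluecker A i j != 0 ->
  pluecker (chart A i j) x y = pluecker A x y / pluecker A i j.
Proof.
move=> nz.
have hd : rows2 A i j 0 0 * rows2 A i j 1 1 - rows2 A i j 0 1 * rows2 A i j 1 0
  = pluecker A i j by rewrite !mxE /pluecker /=; ring.
have := pl_mulr (chart A i j) (rows2 A i j) x y.
rewrite chartK // hd => ->.
by field.
Qed.

Lemma minor_frame A i j : pluecker A i j != 0 -> is_frame A.
Proof.
move=> nz; rewrite /is_frame; apply/eqP; rewrite eqn_leq rank_leq_col /=.
pose E : 'M[C]_(2,4) := \matrix_(r < 2, m < 4) ((m == (if r == 0 then i else j))%:R).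
have hE : E *m A = rows2 A i j.
  apply/matrixP => r c; rewrite mxE !mxE (bigD1 (if r == 0 then i else j)) //=.
  rewrite mxE eqxx mul1r big1 ?addr0 // => m hm.
  by rewrite mxE (negbTE hm) mul0r.
by have := mxrankM_maxr E A; rewrite hE (mxrank_unit (rows2_unit nz)).
Qed.

Lemma frame_minor A : is_frame A -> exists i j, pluecker A i j != 0.
Proof.
move=> fr.
suff : [exists i, exists j, pluecker A i j != 0].
  by case/existsP => i /existsP [j h]; exists i, j.
case: (boolP [exists i, exists j, pluecker A i j != 0]) => // /existsPn H.
exfalso.
have H0 : forall i j, pluecker A i j = 0.
  by move=> i j; move: (H i) => /existsPn /(_ j) /negPn /eqP.
have : row_full A by rewrite -col_leq_rank fr.
case/row_fullP => B hB.
case: (pickP (fun rc : 'I_4 * 'I_2 => A rc.1 rc.2 != 0)) => [[r c] /= hrc|hA]; last first.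
  have A0 : A = 0 by apply/matrixP => r c; move: (hA (r, c)) => /= /negbFE /eqP ->; rewrite mxE.
  by move: hB; rewrite A0 mulmx0 => /matrixP /(_ 0 0); rewrite !mxE /= => /eqP; rewrite eq_sym oner_eq0.
pose v : 'cV[C]_2 := \col_(c' < 2) (if c' == 0 then A r 1 else - A r 0).
have Av : A *m v = 0.
  apply/matrixP => m c'; rewrite mulmx42 !mxE /=.
  by have := H0 m r; rewrite /pluecker => h; rewrite -[RHS]h; ring.
have v0 : v = 0 by rewrite -[v]mul1mx -hB -mulmxA Av mulmx0.
move: hrc; case: (ord2P c) => ->.
- by move/matrixP: v0 => /(_ 1 0); rewrite !mxE /= => /eqP; rewrite oppr_eq0 => ->.
- by move/matrixP: v0 => /(_ 0 0); rewrite !mxE /= => ->; rewrite eqxx.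
Qed.

End Main.

Definition o0 : 'I_4 := @Ordinal 4 0 isT.
Definition o1 : 'I_4 := @Ordinal 4 1 isT.
Definition o2 : 'I_4 := @Ordinal 4 2 isT.
Definition o3 : 'I_4 := @Ordinal 4 3 isT.

Definition psum (V : zmodType) (F : 'I_4 -> 'I_4 -> V) :=
  \sum_(i < 4) \sum_(j < 4 | (i < j)%N) F i j.

Lemma sum4 (V : zmodType) (G : 'I_4 -> V) : \sum_(i < 4) G i = G o0 + G o1 + G o2 + G o3.
Proof.
rewrite !big_ord_recr big_ord0 /= add0r.
by congr (G _ + G _ + G _ + G _); apply: val_inj.
Qed.

Lemma psumE (V : zmodType) (F : 'I_4 -> 'I_4 -> V) :
  psum F = F o0 o1 + F o0 o2 + F o0 o3 + F o1 o2 + F o1 o3 + F o2 o3.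
Proof.
rewrite /psum sum4; rewrite !(big_mkcond (fun j : 'I_4 => _ < j)%N) !sum4 /=.
rewrite !addr0 !add0r; by rewrite !addrA.
Qed.

Lemma ord4P (i : 'I_4) : [\/ i = o0, i = o1, i = o2 | i = o3].
Proof.
case: i => [[|[|[|[|n]]]] Hi] //.
- by constructor 1; apply: val_inj.
- by constructor 2; apply: val_inj.
- by constructor 3; apply: val_inj.
- by constructor 4; apply: val_inj.
Qed.

Definition dist4 (i j k l : 'I_4) :=
  [&& i != j, i != k, i != l, j != k, j != l & k != l].

Lemma dist4_cover i j k l m : dist4 i j k l -> [|| m == i, m == j, m == k | m == l].
Proof.
by case: (ord4P i) => ->; case: (ord4P j) => ->; case: (ord4P k) => ->;
   case: (ord4P l) => ->; case: (ord4P m) => ->.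
Qed.

Lemma psum_perm (R : realType) (F : 'I_4 -> 'I_4 -> R) i j k l :
  (forall x y, F x y = F y x) -> dist4 i j k l ->
  psum F = F i j + F i k + F i l + F j k + F j l + F k l.
Proof.
move=> hs; rewrite psumE.
have s1 := hs o1 o0; have s2 := hs o2 o0; have s3 := hs o3 o0.
have s4 := hs o2 o1; have s5 := hs o3 o1; have s6 := hs o3 o2.
by case: (ord4P i) => ->; case: (ord4P j) => ->; case: (ord4P k) => ->;
   case: (ord4P l) => -> // _; lra.
Qed.

From Stdlib Require Import FunctionalExtensionality.
Section Lim.
Variable R : realType.
Local Notation C := R[i].
Implicit Types A B : 'M[C]_(4,2).
Local Notation nc := (@Normc.normc R).

Definition cvgc (u : nat -> C) (l : C) := forall e : R, 0 < e ->
  exists N, forall n, (N <= n)%N -> sqmod (u n - l) < e.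

Lemma sqmod_nc (z : C) : sqmod z = nc z ^+ 2.
Proof. by case: z => a b; rewrite /= sqr_sqrtr // addr_ge0 ?sqr_ge0. Qed.

Lemma nc_ge0 (z : C) : 0 <= nc z.
Proof. by case: z => a b; rewrite /= sqrtr_ge0. Qed.

Lemma sq_ltP (a b : R) : 0 <= a -> 0 <= b -> (a ^+ 2 < b ^+ 2) = (a < b).
Proof.
move=> a0 b0; apply/idP/idP => h; last nra.
by rewrite ltNge; apply/negP => hh; move: h; rewrite ltNge; apply/negP/negPn; nra.
Qed.

Lemma cvgcP u l : cvgc u l <-> forall e : R, 0 < e ->
  exists N, forall n, (N <= n)%N -> nc (u n - l) < e.
Proof.
split=> h e e0.
- have [N hN] := h (e ^+ 2) (exprn_gt0 2 e0); exists N => n /hN.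
  by rewrite sqmod_nc sq_ltP // ?nc_ge0 // ltW.
- have se : 0 < Num.sqrt e by rewrite sqrtr_gt0.
  have [N hN] := h (Num.sqrt e) se; exists N => n /hN.
  rewrite sqmod_nc => hl; rewrite -(sqr_sqrtr (ltW e0)) sq_ltP //; first exact: nc_ge0.
  exact: sqrtr_ge0.
Qed.

Lemma nc_add (x y : C) : nc (x + y) <= nc x + nc y.
Proof. exact: le_normcD. Qed.

Lemma nc_mul (x y : C) : nc (x * y) = nc x * nc y.
Proof. exact: Normc.normcM. Qed.

Lemma nc_eq0 (x : C) : nc x = 0 -> x = 0.
Proof. exact: Normc.eq0_normc. Qed.

Lemma cvgc_cst c : cvgc (fun _ => c) c.
Proof. by move=> e e0; exists 0%N => n _; rewrite subrr /sqmod /= expr0n addr0. Qed.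

Lemma cvgc_ext u v l : (forall n, u n = v n) -> cvgc u l -> cvgc v l.
Proof. by move=> h hu e /hu [N hN]; exists N => n /hN; rewrite h. Qed.

Lemma cvgc_add u v a b : cvgc u a -> cvgc v b -> cvgc (fun n => u n + v n) (a + b).
Proof.
move=> /cvgcP hu /cvgcP hv; apply/cvgcP => e e0.
have e20 : 0 < e / 2 by rewrite divr_gt0.
have [N1 h1] := hu _ e20; have [N2 h2] := hv _ e20.
exists (maxn N1 N2) => n; rewrite geq_max => /andP[n1 n2].
have := h1 _ n1; have := h2 _ n2 => a2 a1.
have : u n + v n - (a + b) = (u n - a) + (v n - b) by ring.
move=> ->; apply: le_lt_trans (nc_add _ _) _; lra.
Qed.

Lemma cvgc_mul u v a b : cvgc u a -> cvgc v b -> cvgc (fun n => u n * v n) (a * b).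
Proof.
move=> /cvgcP hu /cvgcP hv; apply/cvgcP => e e0.
have na := nc_ge0 a; have nb := nc_ge0 b.
have e20 : 0 < e / 2 by rewrite divr_gt0.
have nb1 : 0 < nc b + 1 by rewrite ltr_wpDl.
have na1 : 0 < nc a + 1 by rewrite ltr_wpDl.
pose e1 := (e / 2) / (nc b + 1).
pose e2 := Num.min 1 ((e / 2) / (nc a + 1)).
have e10 : 0 < e1 by rewrite divr_gt0.
have e20' : 0 < e2 by rewrite lt_min ltr01 /= divr_gt0.
have [N1 h1] := hu _ e10; have [N2 h2] := hv _ e20'.
exists (maxn N1 N2) => n; rewrite geq_max => /andP[n1 n2].
have := h1 _ n1; have := h2 _ n2 => a2 a1.
have : u n * v n - a * b = (u n - a) * v n + a * (v n - b) by ring.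
move=> ->; apply: le_lt_trans (nc_add _ _) _; rewrite !nc_mul.
have Y1 : nc (v n - b) < 1 by apply: lt_le_trans a2 _; rewrite ge_min lexx.
have Y2 : nc (v n - b) < (e / 2) / (nc a + 1) by apply: lt_le_trans a2 _; rewrite ge_min lexx orbT.
rewrite ltr_pdivlMr // in Y2.
rewrite /e1 ltr_pdivlMr // in a1.
have hv1 : nc (v n) <= nc b + 1.
  have -> : v n = b + (v n - b) by ring.
  by apply: le_trans (nc_add _ _) _; rewrite lerD2l ltW.
have X0 := nc_ge0 (u n - a); have Y0 := nc_ge0 (v n - b).
nra.
Qed.

Lemma cvgc_n c : cvgc (fun n => c / (n.+1)%:R) 0.
Proof.
apply/cvgcP => e e0.
have hb := archi_boundP (divr_ge0 (nc_ge0 c) (ltW e0)).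
exists (Num.Def.archi_bound (nc c / e)) => n hn.
rewrite subr0 nc_mul.
have n0 : 0 < (n.+1)%:R :> R by rewrite ltr0n.
have -> : nc ((n.+1)%:R)^-1 = ((n.+1)%:R)^-1.
  by rewrite Normc.normcV normcMn Normc.normc1.
rewrite -[X in X < _]/(nc c / (n.+1)%:R) ltr_pdivrMr // mulrC -ltr_pdivrMr //.
apply: lt_le_trans hb _; rewrite ler_nat; exact: leqW.
Qed.

Lemma cvgc_uniq0 u l : (forall n, u n = 0) -> cvgc u l -> l = 0.
Proof.
move=> h /cvgcP hu; apply: nc_eq0; apply/eqP; rewrite eq_le nc_ge0 andbT.
apply/ler_addgt0Pr => e e0; rewrite add0r.
have [N hN] := hu e e0; have := hN N (leqnn N).
by rewrite h sub0r normcN => /ltW.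
Qed.

Lemma cvgc_pl M Bm i j : mx_cvg M Bm ->
  cvgc (fun n => pluecker (M n) i j) (pluecker Bm i j).
Proof.
move=> h; rewrite /pluecker.
have e := fun x y => h x y.
apply: (@cvgc_ext (fun n => M n i 0 * M n j 1 + (-1) * (M n j 0 * M n i 1))).
  by move=> n; ring.
have -> : Bm i 0 * Bm j 1 - Bm j 0 * Bm i 1 = Bm i 0 * Bm j 1 + (-1) * (Bm j 0 * Bm i 1) by ring.
apply: cvgc_add; first by apply: cvgc_mul; [exact: h|exact: h].
apply: cvgc_mul; first exact: cvgc_cst.
by apply: cvgc_mul; [exact: h|exact: h].
Qed.

Lemma pl_torus t A g i j : pluecker (torus_frame t A g) i j =
  t i * t j * pluecker A i j * (g 0 0 * g 1 1 - g 0 1 * g 1 0).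
Proof. by rewrite /torus_frame pl_mulr pl_diagl. Qed.

Lemma closure_zero A Bm i j : in_torus_orbit_closure A Bm ->
  pluecker A i j = 0 -> pluecker Bm i j = 0.
Proof.
move=> [_ [t [g [_ hc]]]] h0.
apply: (@cvgc_uniq0 (fun n => pluecker (torus_frame (t n) A (g n)) i j)).
  by move=> n; rewrite pl_torus h0 mulr0 mul0r.
exact: cvgc_pl.
Qed.

Lemma diag_unit (d : 'rV[C]_2) : (forall c, d 0 c != 0) -> diag_mx d \in unitmx.
Proof.
move=> hd.
have h : diag_mx d *m diag_mx (\row_c (d 0 c)^-1) = 1%:M.
  rewrite mulmx_diag; apply/matrixP => r c; rewrite !mxE.
  by case: eqP => _; rewrite ?mulr0n ?mulr1n // mulfV.
by case: (mulmx1_unit h).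
Qed.

Lemma reach A i j (s : nat -> 'I_4 -> C) (z : nat -> C) Y :
  pluecker A i j != 0 -> is_frame Y ->
  (forall n m, s n m != 0) -> (forall n, z n != 0) ->
  (forall m, cvgc (fun n => s n m * chart A i j m 0) (Y m 0)) ->
  (forall m, cvgc (fun n => s n m * chart A i j m 1 * z n) (Y m 1)) ->
  in_torus_orbit_closure A Y.
Proof.
move=> nz fY hs hz h0 h1; split => //.
pose D n := diag_mx (\row_(c < 2) (if c == 0 then 1 else z n)).
exists s, (fun n => invmx (rows2 A i j) *m D n); split.
  move=> n; split; first by move=> m; exact: hs.
  rewrite unitmx_mul unitmx_inv rows2_unit //=; apply: diag_unit => c; rewrite mxE.
  by case: (c == 0) => //; rewrite oner_eq0.
have hA : A *m invmx (rows2 A i j) = chart A i j.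
  by rewrite -{1}(chartK nz) mulmxK // rows2_unit.
move=> m c.
suff : cvgc (fun n => torus_frame (s n) A (invmx (rows2 A i j) *m D n) m c) (Y m c) by [].
have -> : (fun n => torus_frame (s n) A (invmx (rows2 A i j) *m D n) m c) =
  (fun n => s n m * chart A i j m c * (if c == 0 then 1 else z n)).
  apply: funext => n; rewrite /torus_frame mulmxA -(mulmxA _ A) hA /D.
  by rewrite mul_diag_mx mul_mx_diag !mxE.
case: (ord2P c) => -> /=.
- by apply: (cvgc_ext _ (h0 m)) => n; rewrite mulr1.
- exact: h1.
Qed.
End Lim.

Section Mu.
Variable R : realType.
Local Notation C := R[i].
Implicit Types A B : 'M[C]_(4,2).

Definition wt A (x y : 'I_4) : R := sqmod (pluecker A x y).

Lemma wt_sym A x y : wt A x y = wt A y x.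
Proof. by rewrite /wt pl_sym sqmodN. Qed.

Lemma wt_ge0 A x y : 0 <= wt A x y.
Proof. exact: sqmod_ge0. Qed.

Definition mem2 (m x y : 'I_4) : R := ((m == x) || (m == y))%:R.

Lemma mu_coord A m : mu A 0 m =
  (psum (wt A))^-1 * psum (fun x y => wt A x y * mem2 m x y).
Proof.
rewrite /mu mxE /psum; congr (_ * _).
rewrite summxE; apply: eq_bigr => x _; rewrite summxE; apply: eq_bigr => y _.
by rewrite !mxE.
Qed.

Lemma delta_coord (lam : 'I_4 -> 'I_4 -> R) m :
  (psum (fun x y => lam x y *: delta R x y)) 0 m = psum (fun x y => lam x y * mem2 m x y).
Proof.
rewrite /psum summxE; apply: eq_bigr => x _; rewrite summxE; apply: eq_bigr => y _.
by rewrite !mxE.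
Qed.

Lemma dist4E i j k l : dist4 i j k l ->
  [/\ (i == j) = false, (i == k) = false, (i == l) = false, (j == k) = false
    & [/\ (j == l) = false, (k == l) = false, (j == i) = false, (k == i) = false
    & [/\ (l == i) = false, (k == j) = false, (l == j) = false & (l == k) = false]]].
Proof.
case/and5P => /negbTE h1 /negbTE h2 /negbTE h3 /negbTE h4 /andP[/negbTE h5 /negbTE h6].
by rewrite (eq_sym j i) (eq_sym k i) (eq_sym l i) (eq_sym k j) (eq_sym l j) (eq_sym l k) h1 h2 h3 h4 h5 h6.
Qed.

Lemma dist4_ex i j : i != j -> exists k l, dist4 i j k l.
Proof.
case: (ord4P i) => ->; case: (ord4P j) => -> // _.
all: first [ by exists o0, o1 | by exists o0, o2 | by exists o0, o3
           | by exists o1, o2 | by exists o1, o3 | by exists o2, o3 ].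
Qed.

Lemma psum_pos A : is_frame A -> 0 < psum (wt A).
Proof.
move=> /frame_minor [i [j nz]].
have wp : 0 < wt A i j by rewrite lt0r sqmod_eq0 nz sqmod_ge0.
rewrite psumE.
have := wt_ge0 A; have := wt_sym A => hs hg.
have g1 := hg o0 o1; have g2 := hg o0 o2; have g3 := hg o0 o3.
have g4 := hg o1 o2; have g5 := hg o1 o3; have g6 := hg o2 o3.
have s1 := hs o1 o0; have s2 := hs o2 o0; have s3 := hs o3 o0.
have s4 := hs o2 o1; have s5 := hs o3 o1; have s6 := hs o3 o2.
have d : forall x, wt A x x = 0 by move=> x; rewrite /wt pl_diag /sqmod /= expr0n addr0.
move: wp; case: (ord4P i) => ->; case: (ord4P j) => ->; rewrite ?d; lra.
Qed.

Lemma mu_in_Delta B : is_frame B -> Delta42 (mu B).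
Proof.
move=> fr; have S0 := psum_pos fr.
exists (fun x y => wt B x y / psum (wt B)); split; first by move=> x y; rewrite divr_ge0 ?wt_ge0 // ltW.
split.
  change (psum (fun x y => wt B x y / psum (wt B)) = 1).
  by rewrite (psumE (fun x y => _ / _)) -!mulrDl -psumE divff // gt_eqF.
rewrite /mu scaler_sumr; apply: eq_bigr => x _; rewrite scaler_sumr.
by apply: eq_bigr => y _; rewrite scalerA mulrC.
Qed.
End Mu.
Arguments mem2 {R} m x y.

Section Vert.
Variable R : realType.
Local Notation C := R[i].
Implicit Types A B X : 'M[C]_(4,2).

Lemma pl_zrow A k y : (forall c, A k c = 0) -> pluecker A k y = 0 /\ pluecker A y k = 0.
Proof. by move=> h; rewrite /pluecker !h !mul0r !mulr0 subrr. Qed.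

Lemma mem2_sym m x y : mem2 m x y = mem2 m y x :> R.
Proof. by rewrite /mem2 orbC. Qed.

Lemma wt_mem_sym A m x y : wt A x y * mem2 m x y = wt A y x * mem2 m y x.
Proof. by rewrite wt_sym mem2_sym. Qed.

Definition Yv i j : 'M[C]_(4,2) :=
  \matrix_(m < 4, c < 2) (if m == i then (c == 0)%:R else if m == j then (c == 1)%:R else 0).

Lemma vertex_in X i j : i != j -> pluecker X i j != 0 -> orbit_polytope X (delta R i j).
Proof.
move=> ij nz.
have [k [l d]] := dist4_ex ij.
have [e1 e2 e3 e4 [e5 e6 e7 e8 [e9 e10 e11 e12]]] := dist4E d.
have Yi : pluecker (Yv i j) i j = 1.
  by rewrite /pluecker !mxE !eqxx e7 /= mulr1 mulr0 subr0.
have fr : is_frame (Yv i j) by apply: (@minor_frame _ _ i j); rewrite Yi oner_eq0.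
exists (Yv i j); split.
  refine (@reach R X i j (fun n m => if (m == i) || (m == j) then 1 else ((n.+1)%:R)^-1) (fun _ => 1) (Yv i j) nz fr _ _ _ _).
  - move=> n m; case: ifP => _; first by rewrite oner_eq0.
    by rewrite invr_eq0 pnatr_eq0.
  - by move=> n; rewrite oner_eq0.
  - move=> m; rewrite !mxE.
    case: (m =P i) => [->|mi] /=.
      apply: (cvgc_ext _ (cvgc_cst _)) => n; rewrite mul1r divff //.
    case: (m =P j) => [->|mj] /=.
      by apply: (cvgc_ext _ (cvgc_cst _)) => n; rewrite mul1r pl_diag mul0r.
    by apply: (cvgc_ext _ (cvgc_n (pluecker X m j / pluecker X i j))) => n; rewrite mulrC.
  - move=> m; rewrite !mxE.
    case: (m =P i) => [->|mi] /=.
      by apply: (cvgc_ext _ (cvgc_cst _)) => n; rewrite mul1r pl_diag mul0r mulr1.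
    case: (m =P j) => [->|mj] /=.
      by apply: (cvgc_ext _ (cvgc_cst _)) => n; rewrite mul1r mulr1 divff.
    by apply: (cvgc_ext _ (cvgc_n (pluecker X i m / pluecker X i j))) => n; rewrite mulr1 mulrC.
have zk : forall c, Yv i j k c = 0 by move=> c; rewrite mxE e8 e10.
have zl : forall c, Yv i j l c = 0 by move=> c; rewrite mxE e9 e11.
have zk1 := fun y => (pl_zrow y zk).1; have zk2 := fun y => (pl_zrow y zk).2.
have zl1 := fun y => (pl_zrow y zl).1; have zl2 := fun y => (pl_zrow y zl).2.
have s0 : sqmod (0 : C) = 0 by rewrite /sqmod /= expr0n addr0.
have s1 : sqmod (1 : C) = 1 by rewrite /sqmod /= expr0n addr0 expr1n.
apply/matrixP => r m; rewrite (ord1 r) mu_coord.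
rewrite (psum_perm (wt_sym _) d) (psum_perm (wt_mem_sym _ _) d).
rewrite /wt Yi !zk2 !zl2 ?zk1 s0 s1 !mxE.
by rewrite /mem2 !mul0r !addr0 invr1 !mul1r.
Qed.

Lemma vertex_out X i j : i != j -> orbit_polytope X (delta R i j) -> pluecker X i j != 0.
Proof.
move=> ij [B [cl hmu]]; apply/negP => /eqP h0.
have fB := cl.1.
have zij := closure_zero cl h0.
have [k [l d]] := dist4_ex ij.
have [e1 e2 e3 e4 [e5 e6 e7 e8 [e9 e10 e11 e12]]] := dist4E d.
have S0 := psum_pos fB.
have hk : mu B 0 k = 0 by rewrite hmu mxE e8 e10.
have hl : mu B 0 l = 0 by rewrite hmu mxE e9 e11.
rewrite mu_coord (psum_perm (wt_mem_sym _ _) d) in hk.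
rewrite mu_coord (psum_perm (wt_mem_sym _ _) d) in hl.
move: hk => /eqP; rewrite mulf_eq0 invr_eq0 (gt_eqF S0) /= => /eqP hk.
move: hl => /eqP; rewrite mulf_eq0 invr_eq0 (gt_eqF S0) /= => /eqP hl.
rewrite /mem2 !eqxx e8 e10 e9 e11 e12 e6 /= in hk hl.
rewrite (psum_perm (wt_sym _) d) in S0.
have wij : wt B i j = 0 by rewrite /wt zij /sqmod /= expr0n addr0.
have := wt_ge0 B; move=> g.
have := g i k; have := g i l; have := g j k; have := g j l; have := g k l.
lra.
Qed.
End Vert.

Section Orb.
Variable R : realType.
Local Notation C := R[i].
Implicit Types A B X : 'M[C]_(4,2).

Ltac close_pair h xy H1 H2 H3 H4 H5 :=
  first [ by move/eqP: xy
        | exact: h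
        | by rewrite pl_sym h oppr0
        | by move: H1; rewrite h eqxx
        | by move: H1; rewrite pl_sym h oppr0 eqxx
        | by move: H2; rewrite h eqxx
        | by move: H2; rewrite pl_sym h oppr0 eqxx
        | by move: H3; rewrite h eqxx
        | by move: H3; rewrite pl_sym h oppr0 eqxx
        | by move: H4; rewrite h eqxx
        | by move: H4; rewrite pl_sym h oppr0 eqxx
        | by move: H5; rewrite h eqxx
        | by move: H5; rewrite pl_sym h oppr0 eqxx ].

Lemma nonfull_pair A i j m m0 : dist4 i j m m0 ->
  (exists x y, x != y /\ pluecker A x y = 0) ->
  pluecker A i j != 0 -> pluecker A i m != 0 -> pluecker A m j != 0 ->
  pluecker A i m0 != 0 -> pluecker A m0 j != 0 -> pluecker A m m0 = 0.
Proof.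
move=> d [x [y [xy h]]] H1 H2 H3 H4 H5.
have := dist4_cover x d; have := dist4_cover y d.
case/or4P => /eqP ey; case/or4P => /eqP ex; subst x y;
  close_pair h xy H1 H2 H3 H4 H5.
Qed.

Definition ca A i j m := chart A i j m 0.
Definition cb A i j m := chart A i j m 1.
Lemma caE A i j m : ca A i j m = pluecker A m j / pluecker A i j.
Proof. by rewrite /ca mxE. Qed.
Lemma cbE A i j m : cb A i j m = pluecker A i m / pluecker A i j.
Proof. by rewrite /cb mxE. Qed.

Lemma orbit_support A B : is_frame A -> is_frame B ->
  (forall x y, (pluecker A x y == 0) = (pluecker B x y == 0)) ->
  (exists x y, x != y /\ pluecker A x y = 0) -> in_torus_orbit A B.
Proof.
move=> fA fB hz hnf.
have [i [j nzA]] := frame_minor fA.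
have nzB : pluecker B i j != 0 by rewrite -hz.
have ij : i != j by apply: contraNneq nzA => ->; rewrite pl_diag.
pose a := ca A i j; pose b := cb A i j; pose a' := ca B i j; pose b' := cb B i j.
have za : forall m, (a' m == 0) = (a m == 0).
  by move=> m; rewrite /a /a' !caE !mulf_eq0 !invr_eq0 (negbTE nzA) (negbTE nzB) !orbF hz.
have zb : forall m, (b' m == 0) = (b m == 0).
  by move=> m; rewrite /b /b' !cbE !mulf_eq0 !invr_eq0 (negbTE nzA) (negbTE nzB) !orbF hz.
have aP : forall m, (a m != 0) = (pluecker A m j != 0).
  by move=> m; rewrite /a caE mulf_eq0 invr_eq0 (negbTE nzA) orbF.
have bP : forall m, (b m != 0) = (pluecker A i m != 0).
  by move=> m; rewrite /b cbE mulf_eq0 invr_eq0 (negbTE nzA) orbF.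
pose tau := if [pick m | (a m != 0) && (b m != 0)] is Some m0
  then b' m0 * a m0 / (a' m0 * b m0) else 1.
have tau0 : tau != 0.
  rewrite /tau; case: pickP => [m0 /andP[h1 h2]|_]; last by rewrite oner_eq0.
  have h1' : a' m0 != 0 by rewrite za.
  have h2' : b' m0 != 0 by rewrite zb.
  by rewrite !mulf_eq0 !invr_eq0 !mulf_eq0 (negbTE h1) (negbTE h2) (negbTE h1') (negbTE h2').
pose t m := if a m != 0 then a' m / a m else if b m != 0 then b' m / (tau * b m) else 1.
have t0 : forall m, t m != 0.
  move=> m; rewrite /t; case: ifP => h1.
    by rewrite mulf_eq0 invr_eq0 negb_or za h1.
  case: ifP => h2; last by rewrite oner_eq0.
  by rewrite mulf_eq0 invr_eq0 mulf_eq0 negb_or negb_or zb h2 tau0.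
have hta : forall m, a' m = t m * a m.
  move=> m; rewrite /t; case: (boolP (a m != 0)) => h; first by rewrite divfK.
  have h0 : a m = 0 by apply/eqP; rewrite -[_ == _]negbK h.
  by move/eqP: (h0); rewrite -za => /eqP ->; rewrite h0 mulr0.
have htb : forall m, b' m = t m * b m * tau.
  move=> m; case: (boolP (b m != 0)) => hb; last first.
    have h0 : b m = 0 by apply/eqP; rewrite -[_ == _]negbK hb.
    by move/eqP: (h0); rewrite -zb => /eqP ->; rewrite h0 mulr0 mul0r.
  have hb' : b' m != 0 by rewrite zb.
  rewrite /t hb; case: (boolP (a m != 0)) => ha0; last by rewrite /=; field; rewrite tau0 hb.
  have ha' : a' m != 0 by rewrite za.
  rewrite /tau; case: pickP => [m0 /andP[h1 h2]|hn]; last by have := hn m; rewrite ha0 hb.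
  have h1' : a' m0 != 0 by rewrite za.
  have h2' : b' m0 != 0 by rewrite zb.
  have [->|mm0] := eqVneq m m0; first by field; rewrite h1 h1' h2.
  have bi : b i = 0 by rewrite /b cbE pl_diag mul0r.
  have aj : a j = 0 by rewrite /a caE pl_diag mul0r.
  have d : dist4 i j m m0.
    rewrite /dist4 ij mm0 /=.
    apply/and4P; split.
    - by apply: contraNneq hb => <-; rewrite bi.
    - by apply: contraNneq h2 => <-; rewrite bi.
    - by apply: contraNneq ha0 => <-; rewrite aj.
    - by rewrite andbT; apply: contraNneq h1 => <-; rewrite aj.
  have pA : pluecker A m m0 = 0.
    by apply: (nonfull_pair d hnf nzA); rewrite -?aP -?bP.
  have pB : pluecker B m m0 = 0 by apply/eqP; rewrite -hz pA.
  have eA : a m * b m0 = a m0 * b m.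
    apply/eqP; rewrite -subr_eq0; have := pl_chart m m0 nzA.
    by rewrite pA mul0r /pluecker => <-; rewrite /a /b /ca /cb.
  have eB : a' m * b' m0 = a' m0 * b' m.
    apply/eqP; rewrite -subr_eq0; have := pl_chart m m0 nzB.
    by rewrite pB mul0r /pluecker => <-; rewrite /a' /b' /ca /cb.
  have bm0 : b m0 = a m0 * b m / a m by rewrite -eA; field.
  have bm0' : b' m0 = a' m0 * b' m / a' m by rewrite -eB; field.
  by rewrite bm0 bm0'; field; rewrite ha0 ha' h1 h1' hb.
have hA : A *m invmx (rows2 A i j) = chart A i j.
  by rewrite -{1}(chartK nzA) mulmxK // rows2_unit.
pose D := diag_mx (\row_(c < 2) (if c == 0 then 1 else tau)).
have hY : chart B i j = diag_mx (\row_k t k) *m chart A i j *m D.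
  apply/matrixP => m c; case: (ord2P c) => ->.
  - rewrite -/(ca B i j m) -/a' hta /a /ca.
    by rewrite mul_mx_diag mul_diag_mx !mxE /= mulr1.
  - rewrite -/(cb B i j m) -/b' htb /b /cb.
    by rewrite mul_mx_diag mul_diag_mx !mxE /=.
exists t, (invmx (rows2 A i j) *m D *m rows2 B i j); split; first exact: t0.
split.
  rewrite !unitmx_mul unitmx_inv !rows2_unit //= andbT; apply: diag_unit => c; rewrite mxE.
  by case: (c == 0) => //; rewrite oner_eq0.
by rewrite /torus_frame -{1}(chartK nzB) hY -hA !mulmxA.
Qed.
End Orb.

Section Seq.
Variable R : realType.
Local Notation C := R[i].

Definition nzs (c : C) (n : nat) : C := if c != 0 then c else ((n.+1)%:R)^-1.

Lemma nzs_neq0 c n : nzs c n != 0.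
Proof. by rewrite /nzs; case: ifP => // _; rewrite invr_eq0 pnatr_eq0. Qed.

Lemma inv_n_neq0 n : ((n.+1)%:R : C)^-1 != 0.
Proof. by rewrite invr_eq0 pnatr_eq0. Qed.

Lemma cvgc_inv : cvgc (fun n => ((n.+1)%:R : C)^-1) 0.
Proof. by apply: (cvgc_ext _ (cvgc_n 1)) => n; rewrite mul1r. Qed.

Lemma cvgc_nzs c : cvgc (nzs c) c.
Proof.
rewrite /nzs; case: (boolP (c != 0)) => h.
  exact: cvgc_cst.
have -> : c = 0 by apply/eqP; rewrite -[_ == _]negbK h.
exact: cvgc_inv.
Qed.

Lemma quad_seq (P Q Rr S : C) : P * S = Q * Rr ->
  exists x y z : nat -> C,
    (forall n, [/\ x n != 0, y n != 0 & z n != 0]) /\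
    [/\ cvgc x P, cvgc (fun n => x n * z n) Q, cvgc y Rr & cvgc (fun n => y n * z n) S].
Proof.
move=> e.
have [P0|P0] := eqVneq P 0.
  have [R0|R0] := eqVneq Rr 0.
    exists (fun n => nzs Q n / (n.+1)%:R), (fun n => nzs S n / (n.+1)%:R), (fun n => (n.+1)%:R).
    split.
      move=> n; split; rewrite ?mulf_eq0 ?negb_or ?nzs_neq0 ?inv_n_neq0 ?pnatr_eq0 //.
    rewrite P0 R0; split.
    - by rewrite -(mulr0 Q); apply: cvgc_mul; [exact: cvgc_nzs|exact: cvgc_inv].
    - by apply: (cvgc_ext _ (cvgc_nzs Q)) => n; rewrite divfK // pnatr_eq0.
    - by rewrite -(mulr0 S); apply: cvgc_mul; [exact: cvgc_nzs|exact: cvgc_inv].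
    - by apply: (cvgc_ext _ (cvgc_nzs S)) => n; rewrite divfK // pnatr_eq0.
  have Q0 : Q = 0 by move: e; rewrite P0 mul0r => /esym /eqP; rewrite mulf_eq0 (negbTE R0) orbF => /eqP.
  exists (nzs P), (fun _ => Rr), (fun n => if S != 0 then S / Rr else ((n.+1)%:R)^-1).
  split.
    move=> n; split; [exact: nzs_neq0 | exact: R0|].
    case: ifP => h; last exact: inv_n_neq0.
    by rewrite mulf_eq0 invr_eq0 negb_or h R0.
  split.
  - exact: cvgc_nzs.
  - have -> : Q = P * (if S != 0 then S / Rr else 0) by rewrite P0 mul0r.
    apply: cvgc_mul; first exact: cvgc_nzs.
    by case: (S != 0); [exact: cvgc_cst|exact: cvgc_inv].
  - exact: cvgc_cst.
  - case: (boolP (S != 0)) => h.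
      by apply: (cvgc_ext _ (cvgc_cst S)) => n; rewrite mulrC divfK.
    have -> : S = Rr * 0 by rewrite mulr0; apply/eqP; rewrite -[_ == _]negbK h.
    by apply: cvgc_mul; [exact: cvgc_cst|exact: cvgc_inv].
exists (fun _ => P), (nzs Rr), (fun n => if Q != 0 then Q / P else ((n.+1)%:R)^-1).
split.
  move=> n; split; [exact: P0 | exact: nzs_neq0|].
  case: ifP => h; last exact: inv_n_neq0.
  by rewrite mulf_eq0 invr_eq0 negb_or h P0.
split.
- exact: cvgc_cst.
- case: (boolP (Q != 0)) => h.
    by apply: (cvgc_ext _ (cvgc_cst Q)) => n; rewrite mulrC divfK.
  have -> : Q = P * 0 by rewrite mulr0; apply/eqP; rewrite -[_ == _]negbK h.
  by apply: cvgc_mul; [exact: cvgc_cst|exact: cvgc_inv].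
- exact: cvgc_nzs.
- case: (boolP (Q != 0)) => h.
    have -> : S = Rr * (Q / P) by apply: (mulfI P0); rewrite e; field.
    by apply: cvgc_mul; [exact: cvgc_nzs|exact: cvgc_cst].
  have S0 : S = 0.
    move: e; have -> : Q = 0 by apply/eqP; rewrite -[_ == _]negbK h.
    by rewrite mul0r => /eqP; rewrite mulf_eq0 (negbTE P0) /= => /eqP.
  rewrite S0 -(mulr0 Rr); apply: cvgc_mul; first exact: cvgc_nzs.
  exact: cvgc_inv.
Qed.
End Seq.

Section Gen.
Variable R : realType.
Local Notation C := R[i].
Implicit Types A B X : 'M[C]_(4,2).

Lemma delta_facts (lam : 'I_4 -> 'I_4 -> R) :
  (forall x y, 0 <= lam x y) -> psum lam = 1 ->
  (forall m, 0 <= psum (fun x y => lam x y * mem2 m x y) /\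
             psum (fun x y => lam x y * mem2 m x y) <= 1) /\
  psum (fun x y => lam x y * mem2 o0 x y) + psum (fun x y => lam x y * mem2 o1 x y) +
  psum (fun x y => lam x y * mem2 o2 x y) + psum (fun x y => lam x y * mem2 o3 x y) = 2.
Proof.
move=> l0 l1; rewrite psumE in l1.
have g1 := l0 o0 o1; have g2 := l0 o0 o2; have g3 := l0 o0 o3.
have g4 := l0 o1 o2; have g5 := l0 o1 o3; have g6 := l0 o2 o3.
split; last by rewrite !psumE /mem2 /=; lra.
by move=> m; case: (ord4P m) => ->; rewrite !psumE /mem2 /=; split; lra.
Qed.

Lemma sum4_perm (f : 'I_4 -> R) i j k l : dist4 i j k l ->
  f o0 + f o1 + f o2 + f o3 = f i + f j + f k + f l.
Proof.
by case: (ord4P i) => ->; case: (ord4P j) => ->; case: (ord4P k) => ->;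
   case: (ord4P l) => -> // _; lra.
Qed.

Lemma ex_max (f : 'I_4 -> R) (P : pred 'I_4) i0 : P i0 ->
  exists2 i, P i & forall m, P m -> f m <= f i.
Proof.
move=> Pi0; case: (@arg_maxP _ _ _ i0 P f Pi0) => i Pi hi.
by exists i => // m /hi.
Qed.
End Gen.

Section H.
Variable R : realType.
Local Notation C := R[i].
Implicit Types A B X : 'M[C]_(4,2).

Lemma generic_delta A v : (forall x y, x != y -> pluecker A x y != 0) ->
  Delta42 v -> orbit_polytope A v.
Proof.
move=> gen [lam [l0 [l1 ->]]].
pose vv m := psum (fun x y => lam x y * mem2 m x y).
have vvE : forall m, psum (fun x y => lam x y *: delta R x y) 0 m = vv m.
  by move=> m; rewrite delta_coord.
have [vb vs] := delta_facts l0 l1.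
have [i _ hi] := @ex_max R vv xpredT o0 isT.
have hi0 : (if i == o0 then o1 else o0) != i.
  by case: (i =P o0) => [->|/eqP]; rewrite // eq_sym.
have [j ji hj] := @ex_max R vv (fun m => m != i) (if i == o0 then o1 else o0) hi0.
have ij : i != j by rewrite eq_sym.
have [k [l d]] := dist4_ex ij.
have [e1 e2 e3 e4 [e5 e6 e7 e8 [e9 e10 e11 e12]]] := dist4E d.
have vji : vv j <= vv i by apply: hi.
have vkj : vv k <= vv j by apply: hj; rewrite e8.
have vlj : vv l <= vv j by apply: hj; rewrite e9.
have vsum : vv i + vv j + vv k + vv l = 2 by rewrite -(sum4_perm vv d).
have nzij := gen i j ij.
pose a := ca A i j; pose b := cb A i j.
have ak : a k != 0 by rewrite /a caE mulf_eq0 invr_eq0 negb_or nzij andbT; apply: gen; rewrite e10.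
have al : a l != 0 by rewrite /a caE mulf_eq0 invr_eq0 negb_or nzij andbT; apply: gen; rewrite e11.
have bk : b k != 0 by rewrite /b cbE mulf_eq0 invr_eq0 negb_or nzij andbT; apply: gen; rewrite e2.
have bl : b l != 0 by rewrite /b cbE mulf_eq0 invr_eq0 negb_or nzij andbT; apply: gen; rewrite e3.
have Dkl : a k * b l - a l * b k != 0.
  have := pl_chart k l nzij; rewrite /pluecker -/(ca A i j k) -/(cb A i j l).
  rewrite -/(ca A i j l) -/(cb A i j k) -/a -/b => ->.
  by rewrite mulf_eq0 invr_eq0 negb_or nzij andbT; apply: gen; rewrite e6.
pose kap := a k * b l / (b k * a l).
have kap0 : kap != 0 by rewrite /kap !mulf_eq0 !invr_eq0 !mulf_eq0 !negb_or ak bk al bl.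
have kap1 : kap - 1 = (a k * b l - a l * b k) / (b k * a l) by rewrite /kap; field; rewrite bk al.
have kap10 : kap - 1 != 0 by rewrite kap1 mulf_eq0 invr_eq0 mulf_eq0 !negb_or Dkl bk al.
pose L := sqmod (kap - 1); pose K := sqmod kap.
have L0 : 0 < L by rewrite lt0r sqmod_eq0 kap10 sqmod_ge0.
have K0 : 0 < K by rewrite lt0r sqmod_eq0 kap0 sqmod_ge0.
have vk0 : 0 <= vv k by case: (vb k).
have vl0 : 0 <= vv l by case: (vb l).
have vi1 : vv i <= 1 by case: (vb i).
have [cij [cik [cil [cjk [cjl [ckl [[cij0 [cik0 cil0 cjk0 cjl0 ckl0]] [[li lj lk ll] [r1 r2]]]]]]]]] :=
  core L0 K0 vk0 vl0 vi1 vsum vji vkj vlj.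
have cij0' : cij != 0 by rewrite gt_eqF.
pose al2 := cjk / cij; pose be2 := cik / cij; pose ga2 := cjl / cij; pose de2 := cil / cij.
have al20 : 0 <= al2 by rewrite divr_ge0 // ltW.
have be20 : 0 <= be2 by rewrite divr_ge0 // ltW.
have ga20 : 0 <= ga2 by rewrite divr_ge0 // ltW.
have de20 : 0 <= de2 by rewrite divr_ge0 // ltW.
have rel : al2 * de2 = K * (be2 * ga2).
  rewrite /al2 /de2 /be2 /ga2.
  have -> : cjk / cij * (cil / cij) = (cil * cjk) / (cij * cij) by field; rewrite ?cij0'.
  have -> : K * (cik / cij * (cjl / cij)) = K * (cik * cjl) / (cij * cij) by field; rewrite ?cij0'.
  by rewrite r2.
have relL : L * (be2 * ga2) = ckl / cij.
  rewrite /be2 /ga2.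
  have -> : L * (cik / cij * (cjl / cij)) = L * (cik * cjl) / (cij * cij) by field; rewrite ?cij0'.
  by rewrite -r1; field; rewrite ?cij0'.
pose q : C := (Num.sqrt be2)%:C%C.
pose r : C := (Num.sqrt ga2)%:C%C.
pose p : C := if al2 != 0 then (Num.sqrt al2)%:C%C else 0.
pose s : C := if al2 != 0 then kap * q * r / p else (Num.sqrt de2)%:C%C.
have sqR : forall x : R, 0 <= x -> sqmod ((Num.sqrt x)%:C%C) = x.
  by move=> x x0; rewrite sqmodR sqr_sqrtr.
have sq : sqmod q = be2 by exact: sqR.
have sr : sqmod r = ga2 by exact: sqR.
have sp : sqmod p = al2.
  rewrite /p; case: ifP => h; first exact: sqR.
  by move/negbFE/eqP: h => ->; rewrite /sqmod /= expr0n addr0.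
have ss : sqmod s = de2.
  rewrite /s; case: ifP => h; last exact: sqR.
  rewrite (sqmodM (kap * q * r)) (sqmodM (kap * q) r) (sqmodM kap q) sqmodV -/K sp sq sr -(mulrA K) -rel; field.
  by rewrite h.
have ps : p * s = kap * (q * r).
  rewrite /s /p; case: ifP => h.
    have hp : (Num.sqrt al2)%:C%C != 0 :> C.
      by rewrite -sqmod_eq0 sqR // h.
    by field.
  rewrite mul0r; move/negbFE/eqP: h => h.
  move: rel; rewrite h mul0r => /esym /eqP; rewrite mulf_eq0 (gt_eqF K0) /= mulf_eq0.
  have c0 : (0 : R)%:C%C = 0 :> C by [].
  by case/orP => /eqP h0; rewrite /q /r h0 sqrtr0 c0 ?mulr0 ?mul0r //; apply/esym; exact: mulr0.
pose Y : 'M[C]_(4,2) := \matrix_(m < 4, c < 2)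
  (if m == i then (c == 0)%:R else if m == j then (c == 1)%:R
   else if m == k then (if c == 0 then p else q) else (if c == 0 then r else s)).
have Yi : forall c, Y i c = (c == 0)%:R by move=> c; rewrite mxE eqxx.
have Yj : forall c, Y j c = (c == 1)%:R by move=> c; rewrite mxE e7 eqxx.
have Yk0 : Y k 0 = p by rewrite mxE e8 e10 eqxx.
have Yk1 : Y k 1 = q by rewrite mxE e8 e10 eqxx.
have Yl0 : Y l 0 = r by rewrite mxE e9 e11 e12.
have Yl1 : Y l 1 = s by rewrite mxE e9 e11 e12.
have PIJ : pluecker Y i j = 1 by rewrite /pluecker !Yi !Yj /=; ring.
have PIK : pluecker Y i k = q by rewrite /pluecker !Yi Yk0 Yk1 /=; ring.
have PJK : pluecker Y j k = - p by rewrite /pluecker !Yj Yk0 Yk1 /=; ring.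
have PIL : pluecker Y i l = s by rewrite /pluecker !Yi Yl0 Yl1 /=; ring.
have PJL : pluecker Y j l = - r by rewrite /pluecker !Yj Yl0 Yl1 /=; ring.
have PKL : pluecker Y k l = (kap - 1) * (q * r).
  by rewrite /pluecker Yk0 Yk1 Yl0 Yl1 ps; ring.
have wIJ : wt Y i j = 1 by rewrite /wt PIJ /sqmod /= expr1n expr0n addr0.
have wIK : wt Y i k = be2 by rewrite /wt PIK.
have wJK : wt Y j k = al2 by rewrite /wt PJK sqmodN.
have wIL : wt Y i l = de2 by rewrite /wt PIL.
have wJL : wt Y j l = ga2 by rewrite /wt PJL sqmodN.
have wKL : wt Y k l = L * (be2 * ga2) by rewrite /wt PKL !sqmodM sq sr.
have frY : is_frame Y by apply: (@minor_frame _ _ i j); rewrite PIJ oner_eq0.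
exists Y; split.
  have hq : (p / a k) * (s / b l) = (q / b k) * (r / a l).
    have -> : (p / a k) * (s / b l) = (p * s) / (a k * b l) by field; rewrite ak bl.
    by rewrite ps /kap; field; rewrite ak bl bk al.
  have [x [y [z [xyz0 [cx cxz cy cyz]]]]] := quad_seq hq.
  pose sqq n m := if m == i then 1 else if m == j then (z n)^-1
    else if m == k then x n else y n.
  have ca_i : chart A i j i 0 = 1 by rewrite mxE /= divff.
  have cb_i : chart A i j i 1 = 0 by rewrite mxE /= pl_diag mul0r.
  have ca_j : chart A i j j 0 = 0 by rewrite mxE /= pl_diag mul0r.
  have cb_j : chart A i j j 1 = 1 by rewrite mxE /= divff.
  apply: (@reach R A i j sqq z Y nzij frY).
  - move=> n m; rewrite /sqq; case: ifP => _; first by rewrite oner_eq0.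
    case: ifP => _; first by rewrite invr_eq0; case: (xyz0 n).
    by case: ifP => _; case: (xyz0 n).
  - by move=> n; case: (xyz0 n).
  - move=> m; case/or4P: (dist4_cover m d) => /eqP ->; rewrite /sqq ?eqxx ?e7 ?e8 ?e10 ?e9 ?e11 ?e12.
    + by rewrite ca_i Yi; apply: (cvgc_ext _ (cvgc_cst _)) => n; rewrite mul1r.
    + by rewrite ca_j Yj; apply: (cvgc_ext _ (cvgc_cst _)) => n; rewrite mulr0.
    + rewrite Yk0 -/(ca A i j k) -/a.
      have -> : p = p / a k * a k by rewrite divfK.
      by apply: cvgc_mul; [exact: cx|exact: cvgc_cst].
    + rewrite Yl0 -/(ca A i j l) -/a.
      have -> : r = r / a l * a l by rewrite divfK.
      by apply: cvgc_mul; [exact: cy|exact: cvgc_cst].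
  - move=> m; case/or4P: (dist4_cover m d) => /eqP ->; rewrite /sqq ?eqxx ?e7 ?e8 ?e10 ?e9 ?e11 ?e12.
    + by rewrite cb_i Yi; apply: (cvgc_ext _ (cvgc_cst _)) => n; rewrite mulr0 mul0r.
    + rewrite cb_j Yj; apply: (cvgc_ext _ (cvgc_cst _)) => n; rewrite mulr1 mulVf //.
      by case: (xyz0 n).
    + rewrite Yk1 -/(cb A i j k) -/b.
      have -> : q = q / b k * b k by rewrite divfK.
      apply: (@cvgc_ext R (fun n => x n * z n * b k)); first by move=> n; ring.
      by apply: cvgc_mul; [exact: cxz|exact: cvgc_cst].
    + rewrite Yl1 -/(cb A i j l) -/b.
      have -> : s = s / b l * b l by rewrite divfK.
      apply: (@cvgc_ext R (fun n => y n * z n * b l)); first by move=> n; ring.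
      by apply: cvgc_mul; [exact: cyz|exact: cvgc_cst].
have csum : cij + cik + cil + cjk + cjl + ckl = 1 by lra.
have Sinv : (1 + be2 + de2 + al2 + ga2 + L * (be2 * ga2))^-1 = cij.
  rewrite relL /be2 /de2 /al2 /ga2.
  have -> : 1 + cik / cij + cil / cij + cjk / cij + cjl / cij + ckl / cij =
    (cij + cik + cil + cjk + cjl + ckl) / cij by field; rewrite ?cij0'.
  by rewrite csum div1r invrK.
apply/matrixP => r0 m; rewrite (ord1 r0) vvE mu_coord.
rewrite (psum_perm (wt_sym _) d) (psum_perm (wt_mem_sym _ _) d).
rewrite wIJ wIK wIL wJK wJL wKL Sinv relL.
case/or4P: (dist4_cover m d) => /eqP ->; rewrite /mem2 !eqxx ?e1 ?e2 ?e3 ?e4 ?e5 ?e6 ?e7 ?e8 ?e9 ?e10 ?e11 ?e12 /=.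
- by rewrite -li /be2 /de2; field; rewrite ?cij0'.
- by rewrite -lj /al2 /ga2; field; rewrite ?cij0'.
- by rewrite -lk /be2 /al2; field; rewrite ?cij0'.
- by rewrite -ll /de2 /ga2; field; rewrite ?cij0'.
Qed.
End H.

Theorem mainTheorem19 (R : realType) (A B : 'M[R[i]]_(4,2)) :
  is_frame A -> is_frame B ->
  orbit_polytope A <> @Delta42 R ->
  orbit_polytope B = orbit_polytope A ->
  in_torus_orbit A B.
Proof.
move=> fA fB nD eqp.
have supp : forall x y, (pluecker A x y == 0) = (pluecker B x y == 0).
  move=> x y; have [->|xy] := eqVneq x y; first by rewrite !pl_diag !eqxx.
  apply/idP/idP => h.
  - apply: contraLR h => hB; apply: (vertex_out xy).
    by rewrite -eqp; apply: vertex_in.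
  - apply: contraLR h => hA; apply: (vertex_out xy).
    by rewrite eqp; apply: vertex_in.
apply: orbit_support => //.
case: (boolP [exists x, exists y, (x != y) && (pluecker A x y == 0)]).
  by case/existsP => x /existsP [y /andP [xy /eqP h]]; exists x, y.
move/existsPn => hn; exfalso; apply: nD.
have gen : forall x y, x != y -> pluecker A x y != 0.
  move=> x y xy; move: (hn x) => /existsPn /(_ y); by rewrite xy.
apply: functional_extensionality => v; apply: propositional_extensionality; split.
- by move=> [B' [cl <-]]; apply: mu_in_Delta; case: cl.
- exact: generic_delta.
Qed.
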